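(* Let $r\ge 4$, $H\in(0,1)$, $\tau>0$, and let $X=X^*_{\tau(1-H)}$. Then $X$ is $r$-robust, and for every $\eta\in[0,H]$: if $T=\tau(1+\eta)$ then $T/\ell(X,T)\le\min\{c_r(1+\eta)/(1-H),\,r\}$, and if $T=\tau(1-\eta)$ then $T/\ell(X,T)\le\min\{c_r(1-\eta)/(1-H),\,r\}$. In particular $T/\ell(X,T)\le \min\{c_r(1+H)/(1-H),\,r\}$ for every $T\in[\tau(1-H),\tau(1+H)]$.
   Context: A schedule is an increasing sequence $X=(x_i)_{i\ge1}$ of positive reals (contract lengths), with completion times $S_i=\sum_{j=1}^i x_j$. For $T>0$, $\ell(X,T)=\max\{x_i: S_i\le T\}$ ($0$ if none). The robustness of $X$ is $\sup_{i\ge2}S_i/x_{i-1}$; $X$ is $r$-robust if this is at most $r$. For $r\ge4$ let $c_r=\frac{r-\sqrt{r^2-4r}}{2}$ and $b_r=\frac{r+\sqrt{r^2-4r}}{2}$. For $\sigma>0$, $X^*_\sigma$ denotes the schedule $(\gamma b_r^i)_{i\ge1}$ where $\gamma>0$ is chosen so that $\sum_{i=1}^m\gamma b_r^i=\sigma$ for some integer $m\ge1$. The prediction is $\tau$, the interruption is $T$, and the error $\eta$ is defined by $T=\tau(1+\eta)$ if $T\ge\tau$ and $T=\tau(1-\eta)$ if $T\le \tau$; it is assumed that $\eta\le H$ with $H$ known to the schedule. *)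

(* Defs.v *)
From mathcomp Require Import all_boot all_order all_algebra.
From mathcomp Require Import classical_sets boolp reals.
Set Implicit Arguments. Unset Strict Implicit. Unset Printing Implicit Defensive.
Import Order.TTheory GRing.Theory Num.Theory.
Local Open Scope ring_scope.
Local Open Scope classical_set_scope.

Section Defs.
Variable R : realType.

(* A schedule is a sequence x : nat -> R, indexed from 1 (x 0 is unused). *)
Definition compl (x : nat -> R) (i : nat) : R := \sum_(1 <= j < i.+1) x j.

(* l(X,T) = max { x_i : i >= 1, S_i <= T }, and 0 if this set is empty.
   The set is finite for the schedules considered, so sup = max. *)
Definition ell (x : nat -> R) (T : R) : R :=
  let A := [set x i | i in [set i : nat | (1 <= i)%N /\ compl x i <= T]] in
  if `[< A = set0 >] then 0 else sup A.

Definition r_robust (x : nat -> R) (r : R) : Prop :=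
  forall i : nat, (2 <= i)%N -> compl x i / x i.-1 <= r.

Definition c_r (r : R) : R := (r - Num.sqrt (r ^+ 2 - 4 * r)) / 2.
Definition b_r (r : R) : R := (r + Num.sqrt (r ^+ 2 - 4 * r)) / 2.

Definition Xstar (r sigma : R) (m : nat) : nat -> R :=
  let gamma := sigma / \sum_(1 <= i < m.+1) b_r r ^+ i in
  fun i => gamma * b_r r ^+ i.
End Defs.

(* Main.v *)
Require Import Defs.
From mathcomp Require Import all_boot all_order all_algebra.
From mathcomp Require Import classical_sets boolp reals.
From mathcomp Require Import ring lra.
Import Order.TTheory GRing.Theory Num.Theory.
Local Open Scope ring_scope.

Section Aux.
Variable R : realType.

Lemma Bfacts (r : R) : 4 <= r ->
  2 <= b_r r /\ c_r r * (b_r r - 1) = b_r r /\ r * (b_r r - 1) = b_r r ^+ 2.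
Proof.
move=> hr; rewrite /b_r /c_r.
set s := Num.sqrt _.
have hs : s ^+ 2 = r ^+ 2 - 4 * r by rewrite sqr_sqrtr //; nra.
have s0 : 0 <= s by rewrite sqrtr_ge0.
split; first lra.
split; nra.
Qed.

Lemma geom (B : R) n : (B - 1) * \sum_(1 <= j < n.+1) B ^+ j = B ^+ n.+1 - B.
Proof.
elim: n => [|n IH]; first by rewrite big_geq // mulr0 expr1 subrr.
rewrite big_nat_recr //= mulrDr IH [in RHS]exprS; ring.
Qed.

End Aux.

Theorem lemma2 (R : realType) (r H tau : R) (m : nat) :
  4 <= r -> 0 < H < 1 -> 0 < tau -> (1 <= m)%N ->
  let X := Xstar r (tau * (1 - H)) m in
  r_robust X r /\
  (forall eta : R, 0 <= eta <= H ->
     (let T := tau * (1 + eta) in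
      0 < ell X T /\ T / ell X T <= Num.min (c_r r * (1 + eta) / (1 - H)) r) /\
     (let T := tau * (1 - eta) in
      0 < ell X T /\ T / ell X T <= Num.min (c_r r * (1 - eta) / (1 - H)) r)) /\
  (forall T : R, tau * (1 - H) <= T <= tau * (1 + H) ->
     0 < ell X T /\ T / ell X T <= Num.min (c_r r * (1 + H) / (1 - H)) r).
Proof.
move=> hr /andP[H0 H1] ht hm X.
have [B2 [hc hrB]] := @Bfacts R r hr.
set B := b_r r in B2 hc hrB *.
set c := c_r r in hc.
pose Sg n := \sum_(1 <= j < n.+1) B ^+ j.
have Sgm : 0 < Sg m.
  rewrite /Sg -(prednK hm) big_nat_recr //=.
  have : 0 <= \sum_(1 <= j < m.-1.+1) B ^+ j by apply: sumr_ge0 => i _; apply: exprn_ge0; lra.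
  have : 0 < B ^+ m.-1.+1 by apply: exprn_gt0; lra.
  lra.
set S := tau * (1 - H).
have S0 : 0 < S by rewrite /S; nra.
set g := S / Sg m.
have g0 : 0 < g by rewrite /g divr_gt0.
have XE : forall i, X i = g * B ^+ i by [].
have CE : forall i, compl X i = g * Sg i.
  by move=> i; rewrite /compl /Sg mulr_sumr.
have Bp : forall i, 0 < B ^+ i by move=> i; apply: exprn_gt0; lra.
have c0 : 0 < c by nra.
have rob : forall k, compl X k.+1 <= r * X k.
  move=> k; rewrite CE XE mulrCA ler_pM2l //.
  have h := geom _ B k.+1.
  have : (B - 1) * Sg k.+1 <= (B - 1) * (r * B ^+ k).
    have e : B ^+ 2 * B ^+ k = B ^+ k.+2 by rewrite -exprD addnC addn2.
    rewrite /Sg h mulrA [(B - 1) * r]mulrC hrB e.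
    have := Bp 1%N; rewrite expr1 => ?; lra.
  rewrite ler_pM2l //; lra.
have Sm : S <= c * X m.
  have -> : S = g * Sg m by rewrite /g divfK // gt_eqF.
  rewrite XE mulrCA ler_pM2l //.
  have : (B - 1) * Sg m <= (B - 1) * (c * B ^+ m).
    rewrite /Sg geom mulrA [(B - 1) * c]mulrC hc -exprS.
    have := Bp 1%N; rewrite expr1 => ?; lra.
  rewrite ler_pM2l //; lra.
have XleC : forall i, (1 <= i)%N -> X i <= compl X i.
  move=> i hi; rewrite CE XE ler_pM2l // /Sg.
  case: i hi => // i _; rewrite big_nat_recr //=.
  have : 0 <= \sum_(1 <= j < i.+1) B ^+ j by apply: sumr_ge0 => j _; apply: exprn_ge0; lra.
  lra.
have core : forall T, S <= T ->
    0 < ell X T /\ T <= r * ell X T /\ S <= c * ell X T.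
  move=> T hST.
  pose A := [set X i | i in [set i : nat | (1 <= i)%N /\ compl X i <= T]]%classic.
  have CmS : compl X m = S by rewrite CE /g divfK // gt_eqF.
  have Am : A (X m) by exists m => //; split => //; rewrite CmS.
  have ubA : forall y, A y -> y <= T.
    by move=> y [i [hi hc'] <-]; apply: le_trans (XleC _ hi) hc'.
  have hsup : has_sup A by split; [exists (X m) | exists T].
  have -> : ell X T = sup A.
    rewrite /ell /= asboolF // => hA.
    suff : (set0 : set R) (X m) by [].
    by rewrite -hA; exact: Am.
  have supm := sup_upper_bound hsup Am.
  pose P := fun i => (1 <= i)%N && (compl X i <= T).
  have exP : exists i, P i by exists m; rewrite /P hm CmS hST.
  have ubP : forall i, P i -> (i <= Num.bound (T / g))%N.
    move=> i /andP[hi hiT].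
    have [//|hlt] := leqP i (Num.bound (T / g)).
    have h2 := upper_nthrootP (ltnW hlt).
    have : 2 ^+ i <= B ^+ i by apply: lerXn2r => //; rewrite ?nnegrE; lra.
    have : g * B ^+ i <= T by rewrite -XE; apply: le_trans (XleC _ hi) hiT.
    rewrite mulrC -ler_pdivlMr // => ? ?; lra.
  case: (ex_maxnP exP ubP) => k /andP[hk1 hkT] kmax.
  have Ak : A (X k) by exists k.
  have supk := sup_upper_bound hsup Ak.
  have hk1T : T < compl X k.+1.
    rewrite ltNge; apply/negP => hle.
    have := kmax k.+1; rewrite /P hle /= => /(_ isT); rewrite ltnn.
    done.
  have := rob k; have := Sm.
  split; first by apply: lt_le_trans supm; rewrite XE mulr_gt0.
  split; nra.
have fin : forall T, S <= T -> 0 < ell X T /\ T / ell X T <= r /\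
    T / ell X T <= c * (T / S).
  move=> T hT; have [l0 [hTl hSl]] := core T hT.
  split => //; split; first by rewrite ler_pdivrMr.
  rewrite ler_pdivrMr //.
  have -> : c * (T / S) * ell X T = c * ell X T * T / S by ring.
  rewrite ler_pdivlMr //; nra.
split.
  move=> i hi; case: i hi => // [[|k]] // _.
  by rewrite /= ler_pdivrMr ?rob // XE mulr_gt0.
split.
  move=> e /andP[e0 eH]; split.
    move=> T; have hT : S <= T by rewrite /T /S ler_pM2l //; lra.
    have [l0 [h1 h2]] := fin T hT; split => //.
    rewrite le_min h1 andbT.
    have -> : c * (1 + e) / (1 - H) = c * (T / S) by rewrite /T /S; field; rewrite subr_eq0 (gt_eqF H1) (gt_eqF ht).
    done.
  move=> T; have hT : S <= T by rewrite /T /S ler_pM2l //; lra.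
  have [l0 [h1 h2]] := fin T hT; split => //.
  rewrite le_min h1 andbT.
  have -> : c * (1 - e) / (1 - H) = c * (T / S) by rewrite /T /S; field; rewrite subr_eq0 (gt_eqF H1) (gt_eqF ht).
  done.
move=> T /andP[hT1 hT2].
have [l0 [h1 h2]] := fin T hT1; split => //.
rewrite le_min h1 andbT.
apply: (le_trans h2).
have -> : c * (1 + H) / (1 - H) = c * ((tau * (1 + H)) / S) by rewrite /S; field; rewrite subr_eq0 (gt_eqF H1) (gt_eqF ht).
rewrite ler_pM2l // ler_pM2r ?invr_gt0 //.
Qed.
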